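(* Let $\bm z\in\mathbb{R}^d$ and $\alpha>1$, and let $\tau^\star=\tau^\star(\alpha)$ be the unique scalar with $\sum_i [(\alpha-1)(z_i-\tau^\star)]_+^{1/(\alpha-1)}=1$, and $p_i^\star=[(\alpha-1)(z_i-\tau^\star)]_+^{1/(\alpha-1)}$. At any $\alpha$ where $\tau^\star$ is differentiable in $\alpha$ and the support $\mathcal S=\{i:p_i^\star>0\}$ is locally constant in $\alpha$, $$\frac{\partial\tau^\star}{\partial\alpha}=\frac{\frac{1}{(\alpha-1)^2}+\frac{\mathsf H^S(\bm p^\star)}{\alpha-1}}{\sum_{i\in\mathcal S}(p_i^\star)^{2-\alpha}},$$ where $\mathsf H^S(\bm p)=-\sum_j p_j\log p_j$ is the Shannon entropy (with $0\log0=0$).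
   Context: Here $[t]_+=\max(t,0)$, and $\bm p^\star$ is exactly the $\alpha$-entmax of $\bm z$, i.e. $\arg\max_{\bm p\in\triangle^d}\bm p^\top\bm z+\frac{1}{\alpha(\alpha-1)}\sum_j(p_j-p_j^\alpha)$, with $\triangle^d=\{\bm p\in\mathbb{R}^d:p_i\ge0,\sum_ip_i=1\}$. *)

(* Defs.v *)
From Stdlib Require Import Reals Lra.
Open Scope R_scope.

(* sumR n f = f 0 + ... + f (n-1)  (indices of R^d are 0..d-1) *)
Fixpoint sumR (n : nat) (f : nat -> R) : R :=
  match n with
  | O => 0
  | S m => sumR m f + f m
  end.

(* [t]_+ ^ y, with the convention 0 ^ y = 0 (y > 0 here). *)
Definition pospow (t y : R) : R :=
  if Rlt_dec 0 t then Rpower t y else 0.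

Definition pstar (z : nat -> R) (alpha tau : R) (i : nat) : R :=
  pospow ((alpha - 1) * (z i - tau)) (1 / (alpha - 1)).

Definition shannon (d : nat) (p : nat -> R) : R :=
  - sumR d (fun j => if Rlt_dec 0 (p j) then p j * ln (p j) else 0).

Definition supp_pow_sum (d : nat) (p : nat -> R) (alpha : R) : R :=
  sumR d (fun i => if Rlt_dec 0 (p i) then Rpower (p i) (2 - alpha) else 0).

(* Main.v *)
Require Import Defs.
From Stdlib Require Import Reals Lra.
Open Scope R_scope.

Lemma sumR_ext n f g : (forall i, (i < n)%nat -> f i = g i) -> sumR n f = sumR n g.
Proof.
  induction n; simpl; intros H; auto.
  rewrite IHn, H; auto.
Qed.

Lemma sumR_lin n f g h a b c :
  sumR n (fun i => a * f i + b * g i + c * h i) = a * sumR n f + b * sumR n g + c * sumR n h.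
Proof. induction n; simpl. ring. rewrite IHn. ring. Qed.

Lemma sumR_nonneg n f : (forall i, (i < n)%nat -> 0 <= f i) -> 0 <= sumR n f.
Proof.
  induction n; simpl; intros H. lra.
  assert (0 <= f n) by (apply H; auto).
  assert (0 <= sumR n f) by (apply IHn; auto). lra.
Qed.

Lemma sumR_pos n f g : (forall i, (i < n)%nat -> 0 <= f i) ->
  (forall i, (i < n)%nat -> 0 < f i -> 0 < g i) -> (forall i, (i < n)%nat -> 0 <= g i) ->
  0 < sumR n f -> 0 < sumR n g.
Proof.
  induction n; simpl; intros Hf Hfg Hg Hs. lra.
  assert (0 <= f n) by (apply Hf; auto).
  assert (0 <= g n) by (apply Hg; auto).
  assert (0 <= sumR n g) by (apply sumR_nonneg; auto).
  destruct (Rlt_dec 0 (sumR n f)) as [Hp|Hp].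
  - assert (0 < sumR n g) by (apply IHn; auto). lra.
  - assert (0 < g n) by (apply Hfg; auto; lra). lra.
Qed.

Lemma sumR_deriv n (g : nat -> R -> R) (dg : nat -> R) x :
  (forall i, (i < n)%nat -> derivable_pt_lim (g i) x (dg i)) ->
  derivable_pt_lim (fun a => sumR n (fun i => g i a)) x (sumR n dg).
Proof.
  induction n; simpl; intros H.
  - apply derivable_pt_lim_const.
  - apply (derivable_pt_lim_plus (fun a => sumR n (fun i => g i a)) (g n)); auto.
Qed.

Lemma pospow_nonneg t y : 0 <= pospow t y.
Proof. unfold pospow; destruct Rlt_dec. unfold Rpower; left; apply exp_pos. lra. Qed.

Lemma pospow_pos t y : 0 < pospow t y -> 0 < t /\ pospow t y = Rpower t y.
Proof. unfold pospow; destruct Rlt_dec; intros; auto; lra. Qed.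

Lemma term_deriv (z : nat -> R) (tau : R -> R) a0 l i :
  1 < a0 -> derivable_pt_lim tau a0 l -> 0 < (a0 - 1) * (z i - tau a0) ->
  derivable_pt_lim (fun a => Rpower ((a - 1) * (z i - tau a)) (1 / (a - 1))) a0
    (let p := Rpower ((a0 - 1) * (z i - tau a0)) (1 / (a0 - 1)) in
     - p * ln p / (a0 - 1) + p / (a0 - 1) ^ 2 - l * Rpower p (2 - a0)).
Proof.
  intros Ha Hd Hu.
  set (b := a0 - 1). set (s := z i - tau a0). set (u0 := b * s).
  assert (Hb : 0 < b) by (unfold b; lra).
  assert (Hs : 0 < s) by (unfold u0 in Hu; fold b s in Hu; nra).
  assert (h1 : derivable_pt_lim (fun a => a - 1) a0 (1 - 0)).
  { apply (derivable_pt_lim_minus id (fct_cte 1)).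
    apply derivable_pt_lim_id. apply derivable_pt_lim_const. }
  assert (h2 : derivable_pt_lim (fun a => z i - tau a) a0 (0 - l)).
  { apply (derivable_pt_lim_minus (fct_cte (z i)) tau); auto. apply derivable_pt_lim_const. }
  assert (hu := derivable_pt_lim_mult _ _ _ _ _ h1 h2).
  assert (hln := derivable_pt_lim_comp _ ln _ _ _ hu (derivable_pt_lim_ln _ Hu)).
  assert (hv := derivable_pt_lim_div (fct_cte 1) (fun a => a - 1) a0 0 (1 - 0)
                  (derivable_pt_lim_const 1 a0) h1 ltac:(lra)).
  assert (hp := derivable_pt_lim_mult _ _ _ _ _ hv hln).
  assert (he := derivable_pt_lim_comp _ exp _ _ _ hp (derivable_pt_lim_exp _)).
  unfold Rpower.
  match goal with |- derivable_pt_lim _ _ ?L => 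
    match type of he with derivable_pt_lim _ _ ?L' => replace L with L' end end.
  - exact he.
  - unfold comp, mult_fct, div_fct, fct_cte, minus_fct in *; simpl.
    fold b s. fold u0. rewrite ln_exp.
    replace (exp ((2 - a0) * (1 / b * ln u0))) with (exp (1 / b * ln u0) / u0).
    + unfold u0, Rsqr. field. lra.
    + replace ((2 - a0) * (1 / b * ln u0)) with (1 / b * ln u0 + - ln u0)
        by (unfold b; field; lra).
      rewrite exp_plus, exp_Ropp, exp_ln; auto. 
Qed.

Theorem mainTheorem2 (d : nat) (z : nat -> R) (tau : R -> R) (alpha0 l : R) :
  (forall alpha, 1 < alpha -> sumR d (pstar z alpha (tau alpha)) = 1) ->
  1 < alpha0 ->
  derivable_pt_lim tau alpha0 l ->
  (exists delta, 0 < delta /\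
     forall alpha, 1 < alpha -> Rabs (alpha - alpha0) < delta ->
       forall i, (i < d)%nat ->
         (0 < pstar z alpha (tau alpha) i <-> 0 < pstar z alpha0 (tau alpha0) i)) ->
  l = (1 / (alpha0 - 1) ^ 2
        + shannon d (pstar z alpha0 (tau alpha0)) / (alpha0 - 1))
      / supp_pow_sum d (pstar z alpha0 (tau alpha0)) alpha0.
Proof.
  intros Hsum Ha Hd [delta [Hdel Hloc]].
  set (P := pstar z alpha0 (tau alpha0)).
  set (g := fun i a => if Rlt_dec 0 (P i) then Rpower ((a - 1) * (z i - tau a)) (1 / (a - 1)) else 0).
  set (dg := fun i => if Rlt_dec 0 (P i) then
      - P i * ln (P i) / (alpha0 - 1) + P i / (alpha0 - 1) ^ 2 - l * Rpower (P i) (2 - alpha0) else 0).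
  assert (HD : derivable_pt_lim (fun a => sumR d (fun i => g i a)) alpha0 (sumR d dg)).
  { apply sumR_deriv. intros i Hi. unfold g, dg. destruct Rlt_dec as [Hp|Hp].
    - destruct (pospow_pos _ _ Hp) as [Hu He].
      pose proof (term_deriv z tau alpha0 l i Ha Hd Hu) as T. simpl in T.
      unfold P, pstar. rewrite He. exact T.
    - apply derivable_pt_lim_const. }
  assert (HE : forall a, 1 < a -> Rabs (a - alpha0) < delta ->
               sumR d (fun i => g i a) = 1).
  { intros a H1 H2. rewrite <- (Hsum a H1). apply sumR_ext. intros i Hi.
    specialize (Hloc a H1 H2 i Hi). fold P in Hloc. unfold g.
    destruct Rlt_dec as [Hp|Hp].
    - destruct (pospow_pos _ _ (proj2 Hloc Hp)) as [_ He]. unfold pstar. rewrite He. reflexivity.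
    - unfold pstar in *. unfold pospow in *. destruct Rlt_dec as [Hq|Hq]; auto.
      exfalso. apply Hp, Hloc. unfold Rpower; apply exp_pos. }
  assert (H0 : derivable_pt_lim (fun a => sumR d (fun i => g i a)) alpha0 0).
  { intros eps Heps. assert (Hm : 0 < Rmin delta (alpha0 - 1)) by (apply Rmin_pos; lra).
    exists (mkposreal _ Hm). intros h Hh0 Hh. simpl in Hh.
    assert (Hh1 := Rmin_l delta (alpha0 - 1)). assert (Hh2 := Rmin_r delta (alpha0 - 1)).
    rewrite HE, HE; try lra.
    - replace ((1 - 1) / h - 0) with 0 by (field; auto). rewrite Rabs_R0; lra.
    - rewrite Rminus_diag, Rabs_R0; lra.
    - apply Rabs_def2 in Hh; lra.
    - replace (alpha0 + h - alpha0) with h by ring; lra. }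
  pose proof (uniqueness_limite _ _ _ _ HD H0) as Hz.
  assert (HP1 : sumR d P = 1) by (apply Hsum; auto).
  assert (Hsplit : sumR d dg =
     (-1 / (alpha0 - 1)) * sumR d (fun j => if Rlt_dec 0 (P j) then P j * ln (P j) else 0)
     + (1 / (alpha0 - 1) ^ 2) * sumR d P
     + (- l) * sumR d (fun i => if Rlt_dec 0 (P i) then Rpower (P i) (2 - alpha0) else 0)).
  { rewrite <- sumR_lin. apply sumR_ext. intros i Hi. unfold dg.
    destruct Rlt_dec as [Hp|Hp].
    - field. lra.
    - assert (P i = 0). { assert (0 <= P i) by apply pospow_nonneg. lra. }
      rewrite H. ring. }
  assert (Hpos : 0 < supp_pow_sum d P alpha0).
  { apply (sumR_pos d P).
    - intros; apply pospow_nonneg.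
    - intros i _ Hp. destruct Rlt_dec; try lra. unfold Rpower; apply exp_pos.
    - intros i _. destruct Rlt_dec. unfold Rpower; left; apply exp_pos. lra.
    - lra. }
  unfold shannon, supp_pow_sum in *. fold P.
  rewrite Hsplit, HP1 in Hz.
  set (Hs := sumR d (fun j : nat => if Rlt_dec 0 (P j) then P j * ln (P j) else 0)) in *.
  set (S := sumR d (fun i : nat => if Rlt_dec 0 (P i) then Rpower (P i) (2 - alpha0) else 0)) in *.
  clear Hsplit.
  assert (Hb : alpha0 - 1 <> 0) by lra.
  assert (Hl : l * S * (alpha0 - 1) ^ 2 = 1 - (alpha0 - 1) * Hs).
  { apply (f_equal (fun t => t * (alpha0 - 1)^2)) in Hz. field_simplify in Hz; auto.
    ring_simplify. ring_simplify in Hz. lra. }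
  assert (HS : S <> 0) by lra.
  assert (Hb2 : (alpha0 - 1) ^ 2 <> 0) by (apply pow_nonzero; lra).
  replace l with (l * S * (alpha0 - 1) ^ 2 / (S * (alpha0 - 1) ^ 2)) by (field; auto).
  rewrite Hl. field. auto.
Qed.
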